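(* Let $m\ge 2$ be even and $n$ a multiple of $m$. Every set $S\subseteq\{0,1\}^n$ of mutually incomparable solutions with respect to $m$-COCZ satisfies $|S|\le(n/m+1)^{m/2}$. Moreover, a Pareto-optimal set of $m$-COCZ consisting of mutually incomparable solutions (one solution for each Pareto-optimal fitness vector) is a set of mutually incomparable solutions of maximum cardinality, and its cardinality is exactly $(n/m+1)^{m/2}$.
   Context: $m$-COCZ: $\{0,1\}^n\to\mathbb N_0^m$, $f_k(x)=\sum_{i=1}^{n/2}x_i+g_k(x)$, where the second half $x_{n/2+1},\dots,x_n$ is split into $m/2$ consecutive blocks of length $n/m$, and for block $b\in[m/2]$, $g_{2b-1}(x)$ is the number of ones and $g_{2b}(x)$ the number of zeros in block $b$. All objectives are maximized. $x\succeq y$ iff $f_j(x)\ge f_j(y)$ for all $j$; $x,y$ are incomparable if neither $x\succeq y$ nor $y\succeq x$; $S$ is a set of mutually incomparable solutions if any two distinct elements of $S$ are incomparable. A point is Pareto-optimal if no other point dominates it. *)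

(* Defs.v *)
From mathcomp Require Import all_boot all_order.

(* A solution is a bit string x in {0,1}^n, represented as {ffun 'I_n -> bool}.
   Positions and objectives are 0-indexed: position i in 'I_n is x_{i+1},
   objective k in 'I_m is f_{k+1}. *)
Notation bits n := {ffun 'I_n -> bool}.

Definition first_half (n : nat) (x : bits n) : nat :=
  \sum_(i < n | i < n %/ 2) x i.

Definition in_block (n m b : nat) (i : 'I_n) : bool :=
  (n %/ 2 + b * (n %/ m) <= i) && (i < n %/ 2 + b.+1 * (n %/ m)).

(* g_{k+1}: for 0-indexed k = 2b (i.e. g_{2(b+1)-1}) the number of ones in
   block b; for k = 2b+1 (i.e. g_{2(b+1)}) the number of zeros in block b *)
Definition g (n m : nat) (x : bits n) (k : 'I_m) : nat :=
  if odd k then \sum_(i < n | in_block n m k./2 i) ~~ x i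
  else \sum_(i < n | in_block n m k./2 i) x i.

Definition cocz (n m : nat) (x : bits n) (k : 'I_m) : nat :=
  first_half n x + g n m x k.

Definition wdom (n m : nat) (x y : bits n) : Prop :=
  forall k : 'I_m, cocz n m y k <= cocz n m x k.

Definition incomparable (n m : nat) (x y : bits n) : Prop :=
  ~ wdom n m x y /\ ~ wdom n m y x.

Definition mutually_incomparable (n m : nat) (S : {set bits n}) : Prop :=
  forall x y, x \in S -> y \in S -> x != y -> incomparable n m x y.

Definition same_fitness (n m : nat) (x y : bits n) : Prop :=
  forall k : 'I_m, cocz n m x k = cocz n m y k.

Definition sdom (n m : nat) (x y : bits n) : Prop :=
  wdom n m x y /\ ~ same_fitness n m x y.

Definition pareto_optimal (n m : nat) (x : bits n) : Prop :=
  forall y : bits n, ~ sdom n m y x.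

Definition pareto_set (n m : nat) (S : {set bits n}) : Prop :=
  (forall x, x \in S -> pareto_optimal n m x) /\
  (forall y : bits n, pareto_optimal n m y ->
     exists2 x, x \in S & same_fitness n m x y).

(* Main.v *)
Require Import Defs.
From mathcomp Require Import all_boot all_order.
From mathcomp Require Import zify.

Lemma cnt n a c v : a <= c -> c <= n ->
  \sum_(i < n | (a <= i) && (i < c)) ((i < a + v) : nat) = minn v (c - a).
Proof.
move=> ac cn.
rewrite -(big_mkord (fun i => (a <= i) && (i < c)) (fun i => nat_of_bool (i < a + v))).
have H: forall k, \sum_(0 <= i < k | (a <= i) && (i < c)) ((i < a + v) : nat)
   = minn (minn c k) (a + v) - a.
  elim=> [|k IH]; first by rewrite big_geq //; lia.
  rewrite big_mkcond big_nat_recr //= -big_mkcond IH.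
  have [h1|h1] := leqP a k; have [h2|h2] := ltnP k c;
    have [h3|h3] := ltnP k (a + v); rewrite /=; lia.
rewrite H; lia.
Qed.

Definition Ob n m b (x : bits n) : nat :=
  \sum_(i < n | in_block n m b i) nat_of_bool (x i).
Definition Zb n m b (x : bits n) : nat :=
  \sum_(i < n | in_block n m b i) nat_of_bool (~~ x i).

Set Implicit Arguments. Unset Strict Implicit.
Section S.
End S.

Lemma O_le n m L h b (x : bits n) : n %/ m = L -> n %/ 2 = h * L -> n = h * L + h * L ->
  b < h -> Ob n m b x <= L.
Proof.
move=> HmL Hh2 Hn hb; rewrite /Ob /in_block HmL Hh2 mulSn.
apply: (@leq_trans (\sum_(i < n | (h * L + b * L <= i) && (i < h * L + (L + b * L)))
     ((i < (h * L + b * L) + L) : nat))).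
  apply: leq_sum => i /andP[_ hi].
  have -> : i < h * L + b * L + L by lia.
  by case: (x i).
rewrite cnt; nia.
Qed.

Lemma OZ n m L h b (x : bits n) : n %/ m = L -> n %/ 2 = h * L -> n = h * L + h * L ->
  b < h -> Zb n m b x = L - Ob n m b x.
Proof.
move=> HmL Hh2 Hn hb.
suff: Ob n m b x + Zb n m b x = L by lia.
rewrite /Ob /Zb -big_split /= /in_block HmL Hh2 mulSn.
rewrite (eq_bigr (fun i : 'I_n => nat_of_bool (i < (h * L + b * L) + L))).
  rewrite cnt; nia.
move=> i /andP[_ hi].
have -> : i < h * L + b * L + L by lia.
by case: (x i).
Qed.

Lemma F_le n (x : bits n) : first_half n x <= n %/ 2.
Proof.
rewrite /first_half.
rewrite (eq_bigl (fun i : 'I_n => (0 <= i) && (i < n %/ 2))) //.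
apply: (@leq_trans (\sum_(i < n | (0 <= i) && (i < n %/ 2)) ((i < 0 + n %/ 2) : nat))).
  apply: leq_sum => i /andP[_ hi]; rewrite add0n hi; by case: (x i).
rewrite cnt //; [lia | exact: leq_div].
Qed.

Lemma coczE n m L h (x : bits n) (k : 'I_m) :
  n %/ m = L -> n %/ 2 = h * L -> n = h * L + h * L -> m = h * 2 ->
  cocz n m x k = first_half n x +
     (if odd k then L - Ob n m k./2 x else Ob n m k./2 x).
Proof.
move=> HmL Hh2 Hn Hm.
have hk : k./2 < h by rewrite ltn_half_double -muln2 -Hm.
rewrite /cocz /g; case: ifP => _ //.
by rewrite -(OZ x HmL Hh2 Hn hk).
Qed.

Lemma blk_uniq n m L h b b' (i : 'I_n) : n %/ m = L -> n %/ 2 = h * L ->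
  in_block n m b i -> in_block n m b' i -> b = b'.
Proof.
move=> HmL Hh2; rewrite /in_block HmL Hh2 !mulSn.
move=> /andP[h1 h2] /andP[h3 h4].
have : b * L <= i - h * L < b * L + L by lia.
have : b' * L <= i - h * L < b' * L + L by lia.
move: (i - h * L) => j; nia.
Qed.

Theorem mainTheorem8 (m n : nat) :
  2 <= m -> ~~ odd m -> m %| n ->
  (forall S : {set bits n}, mutually_incomparable n m S ->
     #|S| <= (n %/ m + 1) ^ (m %/ 2)) /\
  (forall S : {set bits n}, pareto_set n m S -> mutually_incomparable n m S ->
     (forall T : {set bits n}, mutually_incomparable n m T -> #|T| <= #|S|) /\
     #|S| = (n %/ m + 1) ^ (m %/ 2)).
Proof.
move=> m2 evm dvd.
have [h Hm] : exists h, m = h * 2 by exists (m %/ 2); rewrite divnK // dvdn2.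
have [L Hn0] : exists L, n = L * m by apply/dvdnP.
have hpos : 0 < h by lia.
have HmL : n %/ m = L by rewrite Hn0 mulnK //; lia.
have Hh2 : n %/ 2 = h * L by rewrite Hn0 Hm mulnA mulnK // mulnC.
have Hn : n = h * L + h * L by rewrite Hn0 Hm; nia.
have Hmh : m %/ 2 = h by rewrite Hm mulnK.
rewrite Hmh HmL addn1.
pose key (x : bits n) : {ffun 'I_h -> 'I_L.+1} := [ffun b : 'I_h => inord (Ob n m b x)].
have keyE : forall x (b : 'I_h), val (key x b) = Ob n m b x.
  move=> x b; rewrite /key ffunE /= inordK // ltnS (O_le x HmL Hh2 Hn) //.
have cE := fun x k => coczE x k HmL Hh2 Hn Hm.
have m0 : 0 < m by lia.
have m1 : 1 < m by lia.
have dom_F : forall x y : bits n, (forall k : 'I_m, cocz n m y k <= cocz n m x k) ->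
    first_half n y <= first_half n x.
  move=> x y W.
  have := W (Ordinal m0); have := W (Ordinal m1); rewrite !cE /=.
  have := O_le x HmL Hh2 Hn hpos; have := O_le y HmL Hh2 Hn hpos; lia.
have dom_O : forall x y : bits n, first_half n x = first_half n y ->
    (forall k : 'I_m, cocz n m y k <= cocz n m x k) ->
    forall b, b < h -> Ob n m b x = Ob n m b y.
  move=> x y EF W b hb.
  have k0 : b * 2 < m by lia.
  have k1 : (b * 2).+1 < m by lia.
  have := W (Ordinal k0); have := W (Ordinal k1); rewrite !cE /=.
  rewrite muln2 uphalf_double doubleK odd_double /=.
  have := O_le x HmL Hh2 Hn hb; have := O_le y HmL Hh2 Hn hb; lia.
have inj : forall S : {set bits n}, mutually_incomparable n m S -> {in S &, injective key}.
  move=> S HS x y xS yS kxy; apply/eqP/negPn/negP => nxy.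
  have [H1 H2] := HS x y xS yS nxy.
  have eqO : forall b, b < h -> Ob n m b x = Ob n m b y.
    move=> b hb; rewrite -(keyE x (Ordinal hb)) -(keyE y (Ordinal hb)) kxy //.
  have hk : forall k : 'I_m, k./2 < h by move=> k; rewrite ltn_half_double -muln2 -Hm.
  case: (leqP (first_half n y) (first_half n x)) => hF;
    [apply: H1 | apply: H2] => k; rewrite !cE eqO //; lia.
have part1 : forall S : {set bits n}, mutually_incomparable n m S -> #|S| <= L.+1 ^ h.
  move=> S HS; rewrite -(card_in_imset (inj S HS)).
  apply: leq_trans (max_card _) _; by rewrite card_ffun !card_ord.
split=> // S [PO cover] HS.
suff E : #|S| = L.+1 ^ h by split => // T HT; rewrite E; exact: part1.
rewrite -(card_in_imset (inj S HS)).
have -> : key @: S = setT.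
  apply/eqP; rewrite eqEsubset subsetT /=; apply/subsetP => v _.
  pose y : bits n := [ffun i : 'I_n => (i < n %/ 2) ||
     [exists b : 'I_h, in_block n m b i && (i < n %/ 2 + b * (n %/ m) + v b)]].
  have Fy : first_half n y = h * L.
    rewrite /first_half.
    rewrite (eq_bigl (fun i : 'I_n => (0 <= i) && (i < n %/ 2))) //.
    rewrite (eq_bigr (fun i : 'I_n => nat_of_bool (i < 0 + n %/ 2))).
      rewrite cnt //; [lia | rewrite Hh2; lia].
    by move=> i /andP[_ hi]; rewrite ffunE ?add0n hi.
  have Oy : forall b : 'I_h, Ob n m b y = v b.
    move=> b; rewrite /Ob.
    rewrite (eq_bigr (fun i : 'I_n => nat_of_bool (i < n %/ 2 + b * (n %/ m) + v b))).
      rewrite /in_block HmL Hh2 mulSn cnt; have := ltn_ord (v b); have := ltn_ord b; nia.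
    move=> i hin; rewrite ffunE.
    have -> : (i < n %/ 2) = false.
      by move: hin; rewrite /in_block => /andP[h1 _]; apply/negbTE; rewrite -leqNgt; lia.
    rewrite /=; congr nat_of_bool; apply/existsP/idP.
      case=> b' /andP[hb' hi'].
      have eb : b' = b by apply: val_inj; exact: (blk_uniq HmL Hh2 hb' hin).
      by rewrite -eb.
    by move=> hi'; exists b; rewrite hin hi'.
  have POy : pareto_optimal n m y.
    move=> z [Wz NS]; apply: NS.
    have Fz : first_half n z = first_half n y.
      have := dom_F z y Wz; have := F_le z; rewrite Fy Hh2; lia.
    have EO := dom_O z y Fz Wz.
    move=> k; rewrite !cE Fz EO //.
    by rewrite ltn_half_double -muln2 -Hm.
  have [x xS SF] := cover y POy.
  apply/imsetP; exists x => //.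
  have W1 : forall k : 'I_m, cocz n m y k <= cocz n m x k by move=> k; rewrite SF.
  have W2 : forall k : 'I_m, cocz n m x k <= cocz n m y k by move=> k; rewrite SF.
  have EF : first_half n x = first_half n y.
    by apply/eqP; rewrite eqn_leq dom_F // dom_F.
  apply/ffunP => b; apply: val_inj.
  by rewrite keyE (dom_O x y EF W1 b (ltn_ord b)) Oy.
by rewrite cardsT card_ffun !card_ord.
Qed.
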